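(* Let $\Gamma$ be the bipartite graph with vertex set $\{L_1,\dots,L_{12}\}\sqcup\{M_1,\dots,M_{12}\}$, where no two $L$'s and no two $M$'s are adjacent, and $L_i$ is adjacent to $M_j$ if and only if $j\in N(i)$, with $N(1)=\{1,2,6,8,9,12\}$, $N(2)=\{1,2,5,7,10,11\}$, $N(3)=\{3,4,6,8,10,11\}$, $N(4)=\{3,4,5,7,9,12\}$, $N(5)=\{2,4,5,6,10,12\}$, $N(6)=\{1,3,5,6,9,11\}$, $N(7)=\{2,4,7,8,9,11\}$, $N(8)=\{1,3,7,8,10,12\}$, $N(9)=\{1,4,6,7,9,10\}$, $N(10)=\{2,3,5,8,9,10\}$, $N(11)=\{2,3,6,7,11,12\}$, $N(12)=\{1,4,5,8,11,12\}$. Let $S=\mathbb{Z}\Gamma/\operatorname{rad}(\mathbb{Z}\Gamma)$, where $\mathbb{Z}\Gamma$ is the free abelian group on the vertices with Gram matrix $A-2\mathbb{I}_{24}$ ($A$ the adjacency matrix). Then the discriminant quadratic form $q\colon S^\vee/S\to\mathbb{Q}/2\mathbb{Z}$, $q(x)=x^2 \bmod 2\mathbb{Z}$, on the discriminant group $S^\vee/S\cong(\mathbb{Z}/2\mathbb{Z})^{\oplus4}\oplus\mathbb{Z}/16\mathbb{Z}$ is given by the Gram matrix $$\begin{bmatrix}0&\tfrac12\\ \tfrac12&0\end{bmatrix}\oplus\begin{bmatrix}0&\tfrac12\\ \tfrac12&0\end{bmatrix}\oplus\begin{bmatrix}\tfrac{3}{16}\end{bmatrix},$$ where the diagonal entries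 are taken modulo $2\mathbb{Z}$ and the off-diagonal entries modulo $\mathbb{Z}$.
   Context: $\operatorname{rad}$ denotes the kernel of the bilinear form; $S^\vee=\operatorname{Hom}(S,\mathbb{Z})\subset S\otimes\mathbb{Q}$ is the dual lattice. *)

(* Defs.v *)
From mathcomp Require Import all_boot all_order all_algebra.
Set Implicit Arguments. Unset Strict Implicit. Unset Printing Implicit Defensive.
Import Order.TTheory GRing.Theory Num.Theory.
Local Open Scope ring_scope.

(* Vertices of Gamma indexed by 'I_24: vertex k < 12 is L_(k+1),
   vertex 12 + j (j < 12) is M_(j+1). *)
Definition Nbr (i : nat) : seq nat :=
  match i with
  | 1 => [:: 1; 2; 6; 8; 9; 12]%N
  | 2 => [:: 1; 2; 5; 7; 10; 11]%N
  | 3 => [:: 3; 4; 6; 8; 10; 11]%N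
  | 4 => [:: 3; 4; 5; 7; 9; 12]%N
  | 5 => [:: 2; 4; 5; 6; 10; 12]%N
  | 6 => [:: 1; 3; 5; 6; 9; 11]%N
  | 7 => [:: 2; 4; 7; 8; 9; 11]%N
  | 8 => [:: 1; 3; 7; 8; 10; 12]%N
  | 9 => [:: 1; 4; 6; 7; 9; 10]%N
  | 10 => [:: 2; 3; 5; 8; 9; 10]%N
  | 11 => [:: 2; 3; 6; 7; 11; 12]%N
  | 12 => [:: 1; 4; 5; 8; 11; 12]%N
  | _ => [::]
  end.

Definition adj (u v : 'I_24) : bool :=
  [&& (u < 12)%N, (12 <= v)%N & ((v - 12).+1 \in Nbr u.+1)] ||
  [&& (v < 12)%N, (12 <= u)%N & ((u - 12).+1 \in Nbr v.+1)].

Definition gramG : 'M[rat]_24 :=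
  \matrix_(i, j) ((adj i j)%:R - ((i == j)%:R *+ 2)).

Definition bform (x y : 'cV[rat]_24) : rat := (x^T *m gramG *m y) 0 0.

Definition is_int_vec (x : 'cV[rat]_24) : Prop := forall i, x i 0 \is a Num.int.

Definition radQ (x : 'cV[rat]_24) : Prop := gramG *m x = 0.

(* lifts to Q^24 of elements of S^vee (inside S (x) Q = Q^24 / rad) *)
Definition inDual (x : 'cV[rat]_24) : Prop := is_int_vec (gramG *m x).

(* lifts to Q^24 of elements of S = Z Gamma / rad(Z Gamma) *)
Definition inS (x : 'cV[rat]_24) : Prop :=
  exists z w, is_int_vec z /\ radQ w /\ x = z + w.

Definition eqmod2 (a b : rat) : Prop := exists k : int, a - b = (2 * k)%:~R.

(* the quadratic form with Gram matrix U(1/2) + U(1/2) + <3/16>, on integer lifts *)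
Definition Qtarget (c1 c2 c3 c4 c5 : int) : rat :=
  (c1 * c2 + c3 * c4)%:~R + (3%:R / 16%:R) * (c5 ^+ 2)%:~R.

Definition lincomb (g1 g2 g3 g4 g5 : 'cV[rat]_24) (c1 c2 c3 c4 c5 : int) : 'cV[rat]_24 :=
  g1 *~ c1 + g2 *~ c2 + g3 *~ c3 + g4 *~ c4 + g5 *~ c5.

(* Main.v *)
Require Import Defs.
From mathcomp Require Import all_boot all_order all_algebra.
From mathcomp Require Import zify ring lra.
Set Implicit Arguments. Unset Strict Implicit. Unset Printing Implicit Defensive.
Import Order.TTheory GRing.Theory Num.Theory.
Local Open Scope ring_scope.

Definition q16 (z : int) : rat := z%:~R / 16%:R.
Definition mkM m n (f : nat -> nat -> rat) : 'M[rat]_(m,n) := \matrix_(i < m, j < n) f i j.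
Definition sumf (k : nat) (F : nat -> rat) : rat := foldr (fun l acc => F l + acc) 0 (iota 0 k).
Definition mulf k (f g : nat -> nat -> rat) := fun i j => sumf k (fun l => f i l * g l j).

Lemma sumfE k (F : nat -> rat) : \sum_(l < k) F l = sumf k F.
Proof.
rewrite -(big_mkord xpredT F) /sumf /index_iota subn0.
elim: (iota 0 k) => [|a s IH]; first by rewrite big_nil.
by rewrite big_cons IH.
Qed.

Lemma mkM_mul m k n f g : mkM m k f *m mkM k n g = mkM m n (mulf k f g).
Proof.
apply/matrixP => i j; rewrite !mxE /mulf -sumfE.
by apply: eq_bigr => l _; rewrite !mxE.
Qed.

Lemma mkM_add m n f g : mkM m n f + mkM m n g = mkM m n (fun i j => f i j + g i j).
Proof. by apply/matrixP => i j; rewrite !mxE. Qed.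

Lemma mkM_tr m n f : (mkM m n f)^T = mkM n m (fun i j => f j i).
Proof. by apply/matrixP => i j; rewrite !mxE. Qed.

Definition chk m n (P : nat -> nat -> bool) : bool :=
  all (fun i => all (fun j => P i j) (iota 0 n)) (iota 0 m).

Lemma chkP m n P (i : 'I_m) (j : 'I_n) : chk m n P -> P i j.
Proof.
move=> /allP H.
have /H /allP H2 : (i : nat) \in iota 0 m by rewrite mem_iota add0n ltn_ord.
by apply: H2; rewrite mem_iota add0n ltn_ord.
Qed.

Lemma mkM_eq m n (f g : nat -> nat -> rat) : chk m n (fun i j => f i j == g i j) -> mkM m n f = mkM m n g.
Proof. by move=> H; apply/matrixP => i j; rewrite !mxE; apply/eqP; apply: (chkP i j H). Qed.

Lemma mkM0 m n : mkM m n (fun _ _ => 0) = 0.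
Proof. by apply/matrixP => i j; rewrite !mxE. Qed.

Definition adjn (u v : nat) : bool :=
  [&& (u < 12)%N, (12 <= v)%N & ((v - 12).+1 \in Nbr u.+1)] ||
  [&& (v < 12)%N, (12 <= u)%N & ((u - 12).+1 \in Nbr v.+1)].
Definition grf (i j : nat) : rat := (adjn i j)%:R - ((i == j)%:R *+ 2).

Lemma gramGE : gramG = mkM 24 24 grf.
Proof. by apply/matrixP => i j; rewrite !mxE. Qed.

Definition tab (L : seq (seq int)) (i j : nat) : int := nth 0 (nth [::] L i) j.
Definition tabT (L : seq (seq int)) (i j : nat) : int := nth 0 (nth [::] L j) i.
Definition gL : seq (seq int) := ([:: [:: 0; 0; 0; 0; 0; 0; 8; 8; 0; 8; 0; 8; 0; 0; 0; 0; 0; 0; 0; 0; 0; 0; 0; 0];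
  [:: 0; 0; 8; 8; 0; 0; 0; 0; 8; 0; 0; 8; 8; 0; 8; 0; 0; 0; 0; 0; 8; 0; 8; 0];
  [:: 0; 0; 0; 0; 0; 0; 0; 0; 0; 0; 0; 0; 8; 0; 8; 0; 0; 0; 0; 0; 8; 0; 8; 0];
  [:: 8; 0; 8; 0; 0; 8; 8; 0; 8; 0; 0; 8; 8; 0; 8; 0; 0; 0; 0; 0; 8; 0; 8; 0];
  [:: 5; 0; 13; 4; 0; 12; 8; 2; 2; 15; 0; 5; 5; 6; 15; 0; 10; 0; 0; 0; 15; 0; 11; 0]])%Z.

Definition CL : seq (seq int) := ([:: [:: 0; 1; 1; 0; 1; 0; 0; 1; 0; 0; 0; 0; 1; 1; 0; 0; 1; 0; 1; 0; 0; 0; 0; 0];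
  [:: 0; 0; 0; 0; 1; 1; 0; 0; 1; 0; 1; 0; 0; 0; 0; 0; 0; 0; 0; 0; 0; 0; 0; 0];
  [:: 0; 0; 0; 0; 0; 0; 0; 0; 0; 0; 0; 0; 1; 1; 0; 0; 1; 0; 1; 0; 0; 0; 0; 0];
  [:: 1; 0; 1; 0; 0; 0; 0; 0; 1; 0; 1; 0; 0; 0; 0; 0; 0; 0; 0; 0; 0; 0; 0; 0];
  [:: 14; 12; 8; 0; 7; 1; 11; 15; 6; 0; 12; 0; 0; 12; 2; 0; 2; 0; 12; 0; 0; 0; 14; 0]])%Z.

Definition ZL : seq (seq int) := ([:: [:: -5; -3; -4; 0; -1; -1; -3; -5; -2; 0; -5; 0; 0; -3; -2; 0; 0; 0; -3; 0; 0; 0; -5; 0];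
  [:: 0; 0; 0; 0; 0; 0; 0; 0; 0; 0; 0; 0; 0; 0; 0; 0; 0; 0; 0; 0; 0; 0; 0; 0];
  [:: -12; -10; -7; 0; -7; -1; -9; -12; -6; 0; -10; 0; 0; -10; -1; 0; -2; 0; -10; 0; 0; 0; -11; 0];
  [:: -4; -4; -1; 0; -3; 0; -3; -3; -2; 0; -3; 0; 0; -4; 1; 0; -1; 0; -3; 0; 0; 0; -3; 0];
  [:: 0; 0; 0; 0; 0; 0; 0; 0; 0; 0; 0; 0; 0; 0; 0; 0; 0; 0; 0; 0; 0; 0; 0; 0];
  [:: -11; -9; -6; 0; -6; -1; -8; -11; -5; 0; -9; 0; 0; -9; -1; 0; -2; 0; -9; 0; 0; 0; -10; 0];
  [:: -7; -6; -6; 0; -3; -1; -6; -8; -3; 0; -7; 0; 0; -6; -2; 0; -1; 0; -6; 0; 0; 0; -8; 0];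
  [:: -2; -2; -1; 0; -2; 0; -1; -3; -1; 0; -1; 0; -1; -2; 0; 0; -1; 0; -2; 0; 0; 0; -1; 0];
  [:: -2; -1; -2; 0; -1; -1; -1; -2; -2; 0; -3; 0; 0; -1; -1; 0; 0; 0; -1; 0; 0; 0; -2; 0];
  [:: -13; -12; -8; 0; -6; -1; -10; -15; -6; 0; -11; 0; -1; -11; -2; 0; -2; 0; -12; 0; 0; 0; -13; 0];
  [:: 0; 0; 0; 0; 0; 0; 0; 0; 0; 0; 0; 0; 0; 0; 0; 0; 0; 0; 0; 0; 0; 0; 0; 0];
  [:: -5; -4; -3; 0; -4; 0; -4; -5; -3; 0; -5; 0; 0; -5; 0; 0; -1; 0; -5; 0; 0; 0; -4; 0];
  [:: -5; -3; -3; 0; -3; -1; -3; -5; -3; 0; -5; 0; -1; -4; -1; 0; -1; 0; -4; 0; 0; 0; -4; 0];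
  [:: -5; -4; -4; 0; -1; -1; -4; -6; -2; 0; -5; 0; 0; -4; -2; 0; 0; 0; -4; 0; 0; 0; -6; 0];
  [:: -14; -12; -7; 0; -8; -1; -10; -14; -7; 0; -11; 0; -1; -12; -1; 0; -3; 0; -12; 0; 0; 0; -12; 0];
  [:: 0; 0; 0; 0; 0; 0; 0; 0; 0; 0; 0; 0; 0; 0; 0; 0; 0; 0; 0; 0; 0; 0; 0; 0];
  [:: -9; -8; -4; 0; -5; 0; -7; -9; -4; 0; -7; 0; 0; -8; 0; 0; -2; 0; -8; 0; 0; 0; -8; 0];
  [:: 0; 0; 0; 0; 0; 0; 0; 0; 0; 0; 0; 0; 0; 0; 0; 0; 0; 0; 0; 0; 0; 0; 0; 0];
  [:: 0; 0; 0; 0; 0; 0; 0; 0; 0; 0; 0; 0; 0; 0; 0; 0; 0; 0; 0; 0; 0; 0; 0; 0];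
  [:: 0; 0; 0; 0; 0; 0; 0; 0; 0; 0; 0; 0; 0; 0; 0; 0; 0; 0; 0; 0; 0; 0; 0; 0];
  [:: -13; -11; -9; 0; -6; -2; -10; -14; -6; 0; -13; 0; 0; -11; -3; 0; -2; 0; -11; 0; 0; 0; -14; 0];
  [:: 0; 0; 0; 0; 0; 0; 0; 0; 0; 0; 0; 0; 0; 0; 0; 0; 0; 0; 0; 0; 0; 0; 0; 0];
  [:: -10; -8; -6; 0; -6; -1; -8; -10; -5; 0; -9; 0; 0; -9; -1; 0; -2; 0; -9; 0; 0; 0; -10; 0];
  [:: 0; 0; 0; 0; 0; 0; 0; 0; 0; 0; 0; 0; 0; 0; 0; 0; 0; 0; 0; 0; 0; 0; 0; 0]])%Z.

Definition PL : seq (seq int) := ([:: [:: -2; 12; -16; 0; 19; -11; 7; -5; 6; 0; -12; 0; 0; 12; -22; 0; 10; 0; 12; 0; 0; 0; -10; 0];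
  [:: 0; 0; 0; 0; 0; 0; 0; 0; 0; 0; 0; 0; 0; 0; 0; 0; 0; 0; 0; 0; 0; 0; 0; 0];
  [:: -2; -4; 0; 0; -13; 5; -1; 3; -2; 0; 12; 0; 0; -4; 10; 0; -6; 0; -4; 0; 0; 0; 6; 0];
  [:: -8; -16; 16; 0; -12; 12; -4; 12; 0; 0; 8; 0; 0; -16; 24; 0; -8; 0; 0; 0; 0; 0; 8; 0];
  [:: 0; 0; 0; 0; 0; 0; 0; 0; 0; 0; 0; 0; 0; 0; 0; 0; 0; 0; 0; 0; 0; 0; 0; 0];
  [:: 0; 0; 8; 0; -12; -4; 4; 4; 0; 0; 8; 0; 0; 0; 8; 0; -8; 0; 0; 0; 0; 0; 8; 0];
  [:: 8; 8; -16; 0; 16; -8; -8; 0; 8; 0; -8; 0; 8; 8; -16; 0; 8; 0; 8; 0; 0; 0; -16; 0];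
  [:: -4; 0; 8; 0; -10; 2; 6; -10; -4; 0; 8; 0; -8; 0; 4; 0; -4; 0; 0; 0; 0; 0; 12; 0];
  [:: 4; 8; -8; 0; 6; -6; 6; -2; -4; 0; -8; 0; 0; 8; -12; 0; 4; 0; 8; 0; 0; 0; -4; 0];
  [:: 2; -4; 0; 0; 17; -1; 5; -7; -6; 0; 4; 0; -8; 12; -2; 0; 6; 0; -4; 0; 0; 0; 2; 0];
  [:: 0; 0; 0; 0; 0; 0; 0; 0; 0; 0; 0; 0; 0; 0; 0; 0; 0; 0; 0; 0; 0; 0; 0; 0];
  [:: -2; 4; 8; 0; -13; 13; -9; 3; -2; 0; -4; 0; 8; -12; 10; 0; 2; 0; -12; 0; 0; 0; 6; 0];
  [:: -2; 12; 0; 0; -5; -3; 7; -5; -2; 0; -4; 0; -8; 4; -6; 0; 2; 0; 4; 0; 0; 0; 6; 0];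
  [:: 4; 8; -16; 0; 26; -10; 2; -6; 4; 0; -8; 0; 0; 8; -20; 0; 12; 0; 8; 0; 0; 0; -12; 0];
  [:: -6; -12; 16; 0; -15; 7; 5; 1; -6; 0; 20; 0; -8; -4; 14; 0; -10; 0; -4; 0; 0; 0; 18; 0];
  [:: 0; 0; 0; 0; 0; 0; 0; 0; 0; 0; 0; 0; 0; 0; 0; 0; 0; 0; 0; 0; 0; 0; 0; 0];
  [:: -4; -8; 16; 0; -10; 10; -2; 6; -4; 0; 8; 0; 0; -8; 20; 0; -12; 0; -8; 0; 0; 0; 12; 0];
  [:: 0; 0; 0; 0; 0; 0; 0; 0; 0; 0; 0; 0; 0; 0; 0; 0; 0; 0; 0; 0; 0; 0; 0; 0];
  [:: 0; 0; 0; 0; 0; 0; 0; 0; 0; 0; 0; 0; 0; 0; 0; 0; 0; 0; 0; 0; 0; 0; 0; 0];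
  [:: 0; 0; 0; 0; 0; 0; 0; 0; 0; 0; 0; 0; 0; 0; 0; 0; 0; 0; 0; 0; 0; 0; 0; 0];
  [:: 10; 4; -16; 0; 17; -9; 5; 1; 10; 0; -12; 0; 8; 12; -18; 0; 6; 0; 12; 0; 0; 0; -14; 0];
  [:: 0; 0; 0; 0; 0; 0; 0; 0; 0; 0; 0; 0; 0; 0; 0; 0; 0; 0; 0; 0; 0; 0; 0; 0];
  [:: 2; 4; 0; 0; -11; 3; -7; 5; 2; 0; 4; 0; 8; -4; 6; 0; -2; 0; -4; 0; 0; 0; -6; 0];
  [:: 0; 0; 0; 0; 0; 0; 0; 0; 0; 0; 0; 0; 0; 0; 0; 0; 0; 0; 0; 0; 0; 0; 0; 0]])%Z.

Definition QL : seq (seq int) := ([:: [:: 1; 0; 0; 0; -1; 0; 0; 0; 0; 0; 1; 0; 0; 0; 0; 1; 0; -1; -1; -1; 0; 1; 0; 0];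
  [:: 0; 0; 0; 0; 0; 0; 0; 0; 0; 0; 0; 0; 0; 0; 0; 0; 0; 0; 0; 0; 0; 0; 0; 0];
  [:: 0; 0; 1; 0; 1; 0; 0; 0; 0; 0; -1; 0; 0; 0; 0; -1; 0; 0; 1; 0; 0; -1; 0; 0];
  [:: 0; 1; 0; 1; 0; 0; 0; 0; 0; 0; 0; 0; 0; 0; 0; 0; 0; 1; 0; 1; 0; 0; 0; 0];
  [:: 0; 0; 0; 0; 0; 0; 0; 0; 0; 0; 0; 0; 0; 0; 0; 0; 0; 0; 0; 0; 0; 0; 0; 0];
  [:: 0; 0; 0; 0; 1; 1; 0; 0; 0; 0; 0; 0; 0; 0; 0; 0; 0; 0; 1; 1; 0; 0; 0; 0];
  [:: 0; 0; 0; 0; -1; 0; 1; 0; 0; 0; 0; 0; 0; 0; 0; 0; 0; 0; -1; -1; 0; 1; 0; 1];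
  [:: 0; 0; 0; 0; 1; 0; 0; 1; 0; 0; 0; 0; 0; 0; 0; 0; 0; 0; 0; 0; 0; -1; 0; -1];
  [:: 0; 0; 0; 0; 0; 0; 0; 0; 1; 0; 1; 0; 0; 0; 0; 0; 0; -1; -1; 0; 0; 0; 0; 0];
  [:: 0; 1; 0; 0; -1; 0; 0; 0; 0; 1; 0; 0; 0; 0; 0; 1; 0; 1; 0; 0; 0; 0; 0; 1];
  [:: 0; 0; 0; 0; 0; 0; 0; 0; 0; 0; 0; 0; 0; 0; 0; 0; 0; 0; 0; 0; 0; 0; 0; 0];
  [:: 0; -1; 0; 0; 1; 0; 0; 0; 0; 0; 0; 1; 0; 0; 0; -1; 0; 0; 1; 0; 0; 0; 0; -1];
  [:: 0; -1; 0; 0; 1; 0; 0; 0; 0; 0; 1; 0; 1; 0; 0; 0; 0; -1; 0; 0; 0; 0; 0; -1];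
  [:: 0; 0; 0; 0; -2; 0; 0; 0; 0; 0; 0; 0; 0; 1; 0; 1; 0; 0; -1; -1; 0; 1; 0; 1];
  [:: 0; 1; 0; 0; 1; 0; 0; 0; 0; 0; -1; 0; 0; 0; 1; 0; 0; 1; 1; 1; 0; -1; 0; 0];
  [:: 0; 0; 0; 0; 0; 0; 0; 0; 0; 0; 0; 0; 0; 0; 0; 0; 0; 0; 0; 0; 0; 0; 0; 0];
  [:: 0; 0; 0; 0; 0; 0; 0; 0; 0; 0; 0; 0; 0; 0; 0; 0; 1; 1; 1; 1; 0; 0; 0; 0];
  [:: 0; 0; 0; 0; 0; 0; 0; 0; 0; 0; 0; 0; 0; 0; 0; 0; 0; 0; 0; 0; 0; 0; 0; 0];
  [:: 0; 0; 0; 0; 0; 0; 0; 0; 0; 0; 0; 0; 0; 0; 0; 0; 0; 0; 0; 0; 0; 0; 0; 0];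
  [:: 0; 0; 0; 0; 0; 0; 0; 0; 0; 0; 0; 0; 0; 0; 0; 0; 0; 0; 0; 0; 0; 0; 0; 0];
  [:: 0; 1; 0; 0; -1; 0; 0; 0; 0; 0; 1; 0; 0; 0; 0; 1; 0; 0; -1; 0; 1; 1; 0; 1];
  [:: 0; 0; 0; 0; 0; 0; 0; 0; 0; 0; 0; 0; 0; 0; 0; 0; 0; 0; 0; 0; 0; 0; 0; 0];
  [:: 0; -1; 0; 0; 1; 0; 0; 0; 0; 0; -1; 0; 0; 0; 0; -1; 0; 0; 1; 0; 0; 0; 1; 0];
  [:: 0; 0; 0; 0; 0; 0; 0; 0; 0; 0; 0; 0; 0; 0; 0; 0; 0; 0; 0; 0; 0; 0; 0; 0]])%Z.

Definition BL : seq (seq int) := ([:: [:: -32; 24; 32; 16; 32];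
  [:: 24; 0; 0; 32; 64];
  [:: 32; 0; -32; 24; 32];
  [:: 16; 32; 24; 32; 80];
  [:: 32; 64; 32; 80; 131]])%Z.

Definition dzL : seq (seq int) := ([:: [:: 0; 0; 0; 0; 0; 0; 1; 1; 0; 1; 0; 1; 0; 0; 0; 0; 0; 0; 0; 0; 0; 0; 0; 0];
  [:: 0; 0; 1; 1; 0; 0; 0; 0; 1; 0; 0; 1; 1; 0; 1; 0; 0; 0; 0; 0; 1; 0; 1; 0];
  [:: 0; 0; 0; 0; 0; 0; 0; 0; 0; 0; 0; 0; 1; 0; 1; 0; 0; 0; 0; 0; 1; 0; 1; 0];
  [:: 1; 0; 1; 0; 0; 1; 1; 0; 1; 0; 0; 1; 1; 0; 1; 0; 0; 0; 0; 0; 1; 0; 1; 0];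
  [:: 5; 0; 13; 4; 0; 12; 8; 2; 2; 15; 0; 5; 5; 6; 15; 0; 10; 0; 0; 0; 15; 0; 11; 0]])%Z.

Definition dwL : seq (seq int) := ([:: [:: 0; 0; 0; 0; 0; 0; 0; 0; 0; 0; 0; 0; 0; 0; 0; 0; 0; 0; 0; 0; 0; 0; 0; 0];
  [:: 0; 0; 0; 0; 0; 0; 0; 0; 0; 0; 0; 0; 0; 0; 0; 0; 0; 0; 0; 0; 0; 0; 0; 0];
  [:: 0; 0; 0; 0; 0; 0; 0; 0; 0; 0; 0; 0; 0; 0; 0; 0; 0; 0; 0; 0; 0; 0; 0; 0];
  [:: 0; 0; 0; 0; 0; 0; 0; 0; 0; 0; 0; 0; 0; 0; 0; 0; 0; 0; 0; 0; 0; 0; 0; 0];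
  [:: 0; 0; 0; 0; 0; 0; 0; 0; 0; 0; 0; 0; 0; 0; 0; 0; 0; 0; 0; 0; 0; 0; 0; 0]])%Z.
Definition gmf i j := q16 (tabT gL i j).
Definition PLf i j := q16 (tab PL i j).
Definition Cf i j : rat := (tab CL i j)%:~R.
Definition Zf i j : rat := (tab ZL i j)%:~R.
Definition Qf i j : rat := (tab QL i j)%:~R.
Definition Bf i j := q16 (tab BL i j).

Definition gv (k : nat) : 'cV[rat]_24 := mkM 24 1 (fun i _ => gmf i k).
Definition Gm := mkM 24 5 gmf.
Definition Cm := mkM 5 24 Cf.
Definition Zm := mkM 24 24 Zf.
Definition cvf (c1 c2 c3 c4 c5 : int) (k _ : nat) : rat := (nth 0 [:: c1; c2; c3; c4; c5] k)%:~R.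
Definition cvec c1 c2 c3 c4 c5 := mkM 5 1 (cvf c1 c2 c3 c4 c5).

Lemma linE c1 c2 c3 c4 c5 :
  lincomb (gv 0) (gv 1) (gv 2) (gv 3) (gv 4) c1 c2 c3 c4 c5 = Gm *m cvec c1 c2 c3 c4 c5.
Proof.
rewrite /Gm /cvec mkM_mul /lincomb -!scaler_int.
apply/matrixP => i j; rewrite !mxE /mulf /sumf /cvf /=.
ring.
Qed.

Lemma Fsym : gramG^T = gramG.
Proof. by rewrite gramGE mkM_tr; apply: mkM_eq; vm_compute. Qed.

Lemma chk_GGm : chk 24 5 (fun i j => mulf 24 grf gmf i j \is a Num.int).
Proof. by vm_compute. Qed.

Lemma FGGm_int (i : 'I_24) (k : 'I_5) : (gramG *m Gm) i k \is a Num.int.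
Proof. by rewrite gramGE /Gm mkM_mul mxE; apply: (chkP i k chk_GGm). Qed.

Lemma chk_dual : chk 5 24 (fun k i => mulf 24 grf (fun i _ => gmf i k) i 0 \is a Num.int).
Proof. by vm_compute. Qed.

Lemma Fdual k : (k < 5)%N -> inDual (gv k).
Proof.
move=> Hk i; rewrite gramGE /gv mkM_mul mxE.
exact: (chkP (Ordinal Hk) i chk_dual).
Qed.

Lemma FP : gramG *m (Gm *m Cm + Zm) *m gramG = gramG.
Proof.
have e1 : Gm *m Cm + Zm = mkM 24 24 PLf.
  by rewrite /Gm /Cm /Zm mkM_mul mkM_add; apply: mkM_eq; vm_compute.
have e2 : mkM 24 24 PLf *m mkM 24 24 grf = mkM 24 24 Qf.
  by rewrite mkM_mul; apply: mkM_eq; vm_compute.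
rewrite e1 -mulmxA gramGE e2 mkM_mul; apply: mkM_eq; vm_compute. reflexivity.
Qed.

Lemma FB : Gm^T *m gramG *m Gm = mkM 5 5 Bf.
Proof.
by rewrite -mulmxA gramGE /Gm mkM_mul mkM_tr mkM_mul; apply: mkM_eq; vm_compute.
Qed.

Lemma inS_add u v : inS u -> inS v -> inS (u + v).
Proof.
move=> [z1 [w1 [Hz1 [Hw1 ->]]]] [z2 [w2 [Hz2 [Hw2 ->]]]].
exists (z1 + z2), (w1 + w2); split; [|split].
- by move=> i; rewrite mxE; apply: rpredD.
- by rewrite /radQ mulmxDr Hw1 Hw2 addr0.
- by rewrite addrACA.
Qed.

Lemma inS_mulz u a : inS u -> inS (u *~ a).
Proof.
move=> [z [w [Hz [Hw ->]]]].
exists (z *~ a), (w *~ a); split; [|split].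
- by move=> i; rewrite -scaler_int mxE; apply: rpredM => //; apply: intr_int.
- by rewrite /radQ -scaler_int -scalemxAr Hw scaler0.
- by rewrite mulrzDl.
Qed.

Definition dz k : 'cV[rat]_24 := mkM 24 1 (fun i _ => (tab dzL k i)%:~R).
Definition dw k : 'cV[rat]_24 := mkM 24 1 (fun i _ => q16 (tab dwL k i)).

Lemma mkM_mulz m n f a : mkM m n f *~ a = mkM m n (fun i j => a%:~R * f i j).
Proof. by rewrite -scaler_int; apply/matrixP => i j; rewrite !mxE. Qed.

Lemma chk_dw : chk 5 24 (fun k i => mulf 24 grf (fun i _ => q16 (tab dwL k i)) i 0 == 0).
Proof. by vm_compute. Qed.

Lemma chk_dzw : chk 5 24 (fun k i => (nth 0 [:: 2; 2; 2; 2; 16] k)%:~R * gmf i k ==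
   (tab dzL k i)%:~R + q16 (tab dwL k i)).
Proof. by vm_compute. Qed.

Lemma FS k (Hk : (k < 5)%N) : inS (gv k *~ (nth 0 [:: 2; 2; 2; 2; 16] k)).
Proof.
exists (dz k), (dw k); split; [|split].
- by move=> i; rewrite mxE; apply: intr_int.
- rewrite /radQ gramGE /dw mkM_mul -mkM0; apply/matrixP => i j; rewrite !mxE.
  apply/eqP; exact: (chkP (Ordinal Hk) i chk_dw).
- rewrite /gv mkM_mulz /dz /dw mkM_add; apply/matrixP => i j; rewrite !mxE.
  apply/eqP; exact: (chkP (Ordinal Hk) i chk_dzw).
Qed.

Lemma mulf_cvec k c1 c2 c3 c4 c5 : mulf 5 Bf (cvf c1 c2 c3 c4 c5) k 0 =
  (tab BL k 0 * c1 + tab BL k 1 * c2 + tab BL k 2 * c3 + tab BL k 3 * c4 + tab BL k 4 * c5)%:~R / 16%:R.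
Proof. rewrite /mulf /sumf /cvf /Bf /q16 /=. rewrite !intrD !intrM. by field. Qed.

Lemma int16 (t : int) : (t%:~R / 16%:R : rat) \is a Num.int -> (16 %| t)%Z.
Proof.
move=> /intrP [m Hm]; apply/dvdzP; exists m.
have : (t%:~R : rat) = (m * 16)%:~R.
  by rewrite intrM -Hm mulfVK.
by move/eqP; rewrite eqr_int => /eqP.
Qed.
Lemma zmod_aux (V : zmodType) (x a b : V) : x - a = b + (x - (a + b)).
Proof. by rewrite addrCA opprD [b + _]addrCA subrr addr0. Qed.

Lemma int_cvec c1 c2 c3 c4 c5 z w :
  is_int_vec z -> radQ w -> Gm *m cvec c1 c2 c3 c4 c5 = z + w ->
  forall k : 'I_5, mulf 5 Bf (cvf c1 c2 c3 c4 c5) k 0 \is a Num.int.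
Proof.
move=> Hz Hw E k.
have e1 : Gm^T *m gramG *m (Gm *m cvec c1 c2 c3 c4 c5) = mkM 5 1 (mulf 5 Bf (cvf c1 c2 c3 c4 c5)).
  by rewrite mulmxA FB /cvec mkM_mul.
have e2 : Gm^T *m gramG *m (z + w) = (gramG *m Gm)^T *m z.
  by rewrite mulmxDr -(mulmxA _ _ w) Hw mulmx0 addr0 trmx_mul Fsym.
have h : ((gramG *m Gm)^T *m z) k 0 = mulf 5 Bf (cvf c1 c2 c3 c4 c5) k 0.
  by rewrite -e2 -E e1 mxE.
rewrite -h mxE; apply: rpred_sum => l _; apply: rpredM; last exact: Hz.
by rewrite mxE; apply: FGGm_int.
Qed.

Theorem proposition4p4 :
  exists g1 g2 g3 g4 g5 : 'cV[rat]_24,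
    [/\ inDual g1, inDual g2, inDual g3, inDual g4 & inDual g5] /\
    (forall x, inDual x ->
       exists c1 c2 c3 c4 c5 : int, inS (x - lincomb g1 g2 g3 g4 g5 c1 c2 c3 c4 c5)) /\
    (forall c1 c2 c3 c4 c5 : int,
       inS (lincomb g1 g2 g3 g4 g5 c1 c2 c3 c4 c5) <->
       [/\ (2 %| c1)%Z, (2 %| c2)%Z, (2 %| c3)%Z, (2 %| c4)%Z & (16 %| c5)%Z]) /\
    (forall c1 c2 c3 c4 c5 : int,
       let x := lincomb g1 g2 g3 g4 g5 c1 c2 c3 c4 c5 in
       eqmod2 (bform x x) (Qtarget c1 c2 c3 c4 c5)).
Proof.
exists (gv 0), (gv 1), (gv 2), (gv 3), (gv 4).
split; first by split; apply: Fdual.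
split.
  move=> x Hx.
  set y := gramG *m x.
  set cr := Cm *m y.
  have Hcr : forall k : 'I_5, cr k 0 \is a Num.int.
    move=> k; rewrite mxE; apply: rpred_sum => l _; apply: rpredM; last exact: Hx.
    by rewrite mxE; apply: intr_int.
  exists (Num.floor (cr (inord 0) 0)), (Num.floor (cr (inord 1) 0)), (Num.floor (cr (inord 2) 0)),
    (Num.floor (cr (inord 3) 0)), (Num.floor (cr (inord 4) 0)).
  rewrite linE.
  have -> : cvec (Num.floor (cr (inord 0) 0)) (Num.floor (cr (inord 1) 0)) (Num.floor (cr (inord 2) 0))
    (Num.floor (cr (inord 3) 0)) (Num.floor (cr (inord 4) 0)) = cr.
    apply/matrixP => k j; rewrite [in LHS]mxE /cvf (ord1 j).
    rewrite -[in RHS](inord_val k); case: k => [[|[|[|[|[|k]]]]] Hk] //=; rewrite floorK //; apply: Hcr.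
  exists (Zm *m y), (x - (Gm *m Cm + Zm) *m y); split; [|split].
  - move=> i; rewrite mxE; apply: rpred_sum => l _; apply: rpredM; last exact: Hx.
    by rewrite mxE; apply: intr_int.
  - rewrite /radQ mulmxBr /y !mulmxA FP subrr //.
  - rewrite /cr mulmxDl mulmxA.
    exact: zmod_aux.
split.
  move=> c1 c2 c3 c4 c5; split.
    rewrite linE => [[z [w [Hz [Hw E]]]]].
    have H := int_cvec Hz Hw E.
    pose k0 : 'I_5 := inord 0; have e0 : (k0 : nat) = 0%N by rewrite /k0 inordK.
    have h0 := H k0; rewrite e0 mulf_cvec in h0; move/int16: h0 => {e0}h0; rewrite /tab /= in h0.
    pose k1 : 'I_5 := inord 1; have e1 : (k1 : nat) = 1%N by rewrite /k1 inordK.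
    have h1 := H k1; rewrite e1 mulf_cvec in h1; move/int16: h1 => {e1}h1; rewrite /tab /= in h1.
    pose k2 : 'I_5 := inord 2; have e2 : (k2 : nat) = 2%N by rewrite /k2 inordK.
    have h2 := H k2; rewrite e2 mulf_cvec in h2; move/int16: h2 => {e2}h2; rewrite /tab /= in h2.
    pose k3 : 'I_5 := inord 3; have e3 : (k3 : nat) = 3%N by rewrite /k3 inordK.
    have h3 := H k3; rewrite e3 mulf_cvec in h3; move/int16: h3 => {e3}h3; rewrite /tab /= in h3.
    pose k4 : 'I_5 := inord 4; have e4 : (k4 : nat) = 4%N by rewrite /k4 inordK.
    have h4 := H k4; rewrite e4 mulf_cvec in h4; move/int16: h4 => {e4}h4; rewrite /tab /= in h4.
    clear -h0 h1 h2 h3 h4; split; lia.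
  case=> /dvdzP [a1 ->] /dvdzP [a2 ->] /dvdzP [a3 ->] /dvdzP [a4 ->] /dvdzP [a5 ->].
  rewrite /lincomb !(mulrC _ 2%Z) !(mulrC _ 16%Z) !mulrzA.
  apply: inS_add; [apply: inS_add; [apply: inS_add; [apply: inS_add|]|]|];
    apply: inS_mulz; [exact: (FS (k:=0)) | exact: (FS (k:=1)) | exact: (FS (k:=2))
                     | exact: (FS (k:=3)) | exact: (FS (k:=4))].
move=> c1 c2 c3 c4 c5 x.
rewrite /x /bform linE trmx_mul.
have -> : (cvec c1 c2 c3 c4 c5)^T *m Gm^T *m gramG *m (Gm *m cvec c1 c2 c3 c4 c5)
  = (cvec c1 c2 c3 c4 c5)^T *m (Gm^T *m gramG *m Gm) *m cvec c1 c2 c3 c4 c5 by rewrite !mulmxA.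
rewrite FB /cvec mkM_tr !mkM_mul mxE /mulf /sumf /cvf /Bf /tab /=.
exists (- c1 ^+ 2 - c3 ^+ 2 + c4 ^+ 2 + 4 * c5 ^+ 2 + c1 * c2 + 2 * c1 * c3 + c1 * c4 + 2 * c1 * c5
   + 2 * c2 * c4 + 4 * c2 * c5 + c3 * c4 + 2 * c3 * c5 + 5 * c4 * c5).
rewrite /Qtarget /q16.
by field.
Qed.
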